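(* Let $\mathcal H$ be a hypothesis class, and let $S$ be a sample of size $n>1$ that is not realizable by $\mathcal H$ but every proper subsample of $S$ is realizable by $\mathcal H$. Then there exist two functions $F_a,F_b$ mapping $n$-bit strings $x,y\in\{0,1\}^n$ to subsamples of $S$ such that $x\cap y=\emptyset$ (identifying bit strings with subsets of $[n]$) if and only if the joint sample $(F_a(x),F_b(y))$ is not realizable by $\mathcal H$.
   Context: A sample is a finite sequence of examples $(x,y)\in\mathcal X\times\{\pm1\}$; a subsample of $S$ is a sample all of whose examples appear in $S$; $(S_1,S_2)$ denotes concatenation. A sample is realizable by $\mathcal H$ if some $h\in\mathcal H$ agrees with all its examples. *)

(* Defs.v *)
From Stdlib Require List.
From mathcomp Require Import all_boot.
Set Implicit Arguments. Unset Strict Implicit. Unset Printing Implicit Defensive.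

(* Labels {+1,-1} are encoded as bool (true = +1, false = -1).
   A hypothesis is a function X -> bool; a hypothesis class is a predicate on them. *)
Definition sample (X : Type) := seq (X * bool).

Definition subsample (X : Type) (T S : sample X) : Prop :=
  forall e, List.In e T -> List.In e S.

Definition proper_subsample (X : Type) (T S : sample X) : Prop :=
  subsample T S /\ (size T < size S)%N.

Definition realizable (X : Type) (H : (X -> bool) -> Prop) (S : sample X) : Prop :=
  exists h, H h /\ forall e, List.In e S -> h e.1 = e.2.

Definition bits_set (n : nat) (x : {ffun 'I_n -> bool}) : {set 'I_n} :=
  [set i | x i].

(* Main.v *)
Require Import Defs.
From mathcomp Require Import all_boot.

Lemma In_mem (T : eqType) (x : T) (s : seq T) : List.In x s <-> x \in s.
Proof.
elim: s => [|a s IH] /=; first by split.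
rewrite in_cons; split.
- by case=> [->|/IH ->]; rewrite ?eqxx ?orbT.
- by case/orP=> [/eqP ->|/IH]; [left|right].
Qed.

Lemma nth_In_S (A : Type) (e0 : A) (s : seq A) i : (i < size s)%N -> List.In (nth e0 s i) s.
Proof.
elim: s i => [|a s IH] [|i] //= Hi; [by left| right; exact: IH].
Qed.

Lemma In_nth_S (A : Type) (e0 : A) (s : seq A) e : List.In e s ->
  exists i, (i < size s)%N /\ nth e0 s i = e.
Proof.
elim: s => [|a s IH] //= [->|/IH [i [Hi He]]]; first by exists 0.
by exists i.+1.
Qed.

Lemma real_mono (X : Type) (H : (X -> bool) -> Prop) (T U : sample X) :
  realizable H T -> (forall e, List.In e U -> List.In e T) -> realizable H U.
Proof. by move=> [h [Hh Ht]] Hs; exists h; split => // e /Hs /Ht. Qed.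

Theorem lemma5 (X : Type) (H : (X -> bool) -> Prop) (S : sample X) :
  (1 < size S)%N ->
  ~ realizable H S ->
  (forall T, proper_subsample T S -> realizable H T) ->
  exists Fa Fb : {ffun 'I_(size S) -> bool} -> sample X,
    (forall x, subsample (Fa x) S) /\
    (forall y, subsample (Fb y) S) /\
    (forall x y,
       bits_set x :&: bits_set y = set0 <-> ~ realizable H (Fa x ++ Fb y)).
Proof.
move=> Hn HS Hsub.
have [e0 _] : exists e0 : X * bool, True by case: S Hn {HS Hsub} => // a.
pose f (i : 'I_(size S)) := nth e0 S i.
pose F (x : {ffun 'I_(size S) -> bool}) := map f [seq i <- enum 'I_(size S) | ~~ x i].
have inF : forall x e, List.In e (F x) <-> exists i, ~~ x i /\ e = f i.
  move=> x e; rewrite List.in_map_iff; split.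
    by case=> i [<- /In_mem]; rewrite mem_filter => /andP [Hi _]; exists i.
  case=> i [Hi ->]; exists i; split => //; apply/In_mem.
  by rewrite mem_filter Hi mem_enum.
have subF : forall x, subsample (F x) S.
  by move=> x e /inF [i [_ ->]]; apply: nth_In_S.
exists F, F; do 2 split => //.
move=> x y; split.
- move=> Hxy Hr; apply: HS; apply: (@real_mono X H _ S Hr) => e /(@In_nth_S _ e0 _ _) [i [Hi <-]].
  have := Hxy; move/setP/(_ (Ordinal Hi)); rewrite !inE => Hc.
  apply: List.in_or_app.
  case Hx: (x (Ordinal Hi)); move: Hc; rewrite Hx /=.
  + by move=> Hy; right; apply/inF; exists (Ordinal Hi); rewrite Hy.
  + by move=> _; left; apply/inF; exists (Ordinal Hi); rewrite Hx.
- move=> Hnr; case: (boolP (bits_set x :&: bits_set y == set0)) => [/eqP //|/set0Pn [i]].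
  rewrite !inE => /andP [Hxi Hyi]; exfalso; apply: Hnr.
  pose T := map f (rem i (enum 'I_(size S))).
  have HT : realizable H T.
    apply: Hsub; split.
      move=> e /List.in_map_iff [j [<- _]]; exact: nth_In_S.
    by rewrite size_map size_rem ?mem_enum // size_enum_ord; case: (size S) Hn.
  apply: (@real_mono X H T _ HT) => e He; case: (List.in_app_or _ _ _ He) => [/(proj1 (inF x e))|/(proj1 (inF y e))] [j [Hj ->]];
    apply/List.in_map_iff; exists j; split => //; apply/In_mem;
    rewrite (mem_rem_uniq _ (enum_uniq _)) inE mem_enum andbT;
    by apply/eqP => Eji; move: Hj; rewrite Eji ?Hxi ?Hyi.
Qed.
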